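(* A set $A\subseteq2^\omega$ is $\mathcal T$-clopen (i.e. $A$ is measurable, $\Phi(A)=A$ and $\Phi(2^\omega\setminus A)=2^\omega\setminus A$) if and only if $A=\Phi(B)$ for some dualistic measurable $B$, if and only if $A\in\mathrm{ran}(\Phi)$ and $A$ is dualistic. Moreover the family of $\mathcal T$-clopen sets is a proper subfamily of $\{\Phi(B): B\text{ measurable}\}\cap\boldsymbol{\Delta}^0_2$.
   Context: $2^\omega$ is the Cantor space; $N_s=\{x:s\subset x\}$; $\mu$ the coin-tossing measure with $\mu(N_s)=2^{-\mathrm{lh}(s)}$. For measurable $A$ and $x$, $\mathcal D_A(x)=\lim_n\mu(A\cap N_{x\restriction n})/\mu(N_{x\restriction n})$ when it exists; $\Phi(A)=\{x:\mathcal D_A(x)=1\}$; $\mathrm{ran}(\Phi)=\{\Phi(B):B\text{ measurable}\}$. A measurable $B$ is dualistic if $\mathcal D_B(x)$ exists and belongs to $\{0,1\}$ for every $x$. $\boldsymbol{\Delta}^0_2$: sets both $F_\sigma$ and $G_\delta$. *)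

(* Defs.v *)
From Stdlib Require Import Reals List Classical ClassicalEpsilon.
Open Scope R_scope.

Definition Cantor := nat -> bool.
Definition cset := Cantor -> Prop.

Definition set_eq (A B : cset) : Prop := forall x, A x <-> B x.
Definition inter (A B : cset) : cset := fun x => A x /\ B x.
Definition compl (A : cset) : cset := fun x => ~ A x.
Definition diff (A B : cset) : cset := fun x => A x /\ ~ B x.

Definition N (s : list bool) : cset :=
  fun x => forall i, (i < length s)%nat -> nth i s false = x i.

Definition restr (x : Cantor) (n : nat) : list bool := map x (seq 0 n).

(* weight of an optional basic open set: 2^{-lh s}, or 0 for "no set" *)
Definition wt (o : option (list bool)) : R :=
  match o with Some s => / 2 ^ length s | None => 0 end.

Definition admissible (A : cset) (r : R) : Prop :=
  exists f : nat -> option (list bool),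
    (forall x, A x -> exists n s, f n = Some s /\ N s x) /\
    (forall n, sum_f_R0 (fun i => wt (f i)) n <= r).

(* outer coin-tossing measure: mu*(A) = inf of admissible bounds *)
Definition outer (A : cset) : R :=
  - epsilon (inhabits 0) (is_lub (fun y => admissible A (- y))).

Definition measurable (A : cset) : Prop :=
  forall E : cset, outer E = outer (inter E A) + outer (diff E A).

Definition density_at (A : cset) (x : Cantor) (l : R) : Prop :=
  Un_cv (fun n => outer (inter A (N (restr x n))) / outer (N (restr x n))) l.

Definition Phi (A : cset) : cset := fun x => density_at A x 1.

Definition in_ran_Phi (A : cset) : Prop :=
  exists B, measurable B /\ set_eq A (Phi B).

Definition dualistic (B : cset) : Prop :=
  measurable B /\
  forall x, exists l, density_at B x l /\ (l = 0 \/ l = 1).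

Definition T_clopen (A : cset) : Prop :=
  measurable A /\ set_eq (Phi A) A /\ set_eq (Phi (compl A)) (compl A).

Definition is_open (U : cset) : Prop :=
  forall x, U x -> exists n, forall y, N (restr x n) y -> U y.
Definition is_closed (F : cset) : Prop := is_open (compl F).
Definition F_sigma (A : cset) : Prop :=
  exists F : nat -> cset, (forall n, is_closed (F n)) /\
    set_eq A (fun x => exists n, F n x).
Definition G_delta (A : cset) : Prop :=
  exists G : nat -> cset, (forall n, is_open (G n)) /\
    set_eq A (fun x => forall n, G n x).
Definition Delta02 (A : cset) : Prop := F_sigma A /\ G_delta A.

(* Main.v *)
From Stdlib Require Import Reals List Lra Lia Classical ClassicalEpsilon Arith PArith.
From Stdlib Require Cantor.
Require Import Defs.
Import ListNotations.
Open Scope R_scope.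

Definition w (s : list bool) : R := / 2 ^ length s.

Lemma w_pos s : 0 < w s.
Proof. unfold w. apply Rinv_0_lt_compat, pow_lt; lra. Qed.

Lemma w_nil : w [] = 1.
Proof. unfold w; simpl; apply Rinv_1. Qed.

Lemma w_cons b s : w (b :: s) = w s / 2.
Proof. unfold w; simpl. rewrite Rinv_mult. unfold Rdiv. lra. Qed.

Lemma w_snoc s b : w (s ++ [b]) = w s / 2.
Proof. unfold w. rewrite length_app. simpl. rewrite pow_add. simpl.
  rewrite Rinv_mult. unfold Rdiv. lra. Qed.

Lemma w_le1 s : w s <= 1.
Proof. induction s as [|b s IH]. rewrite w_nil; lra. rewrite w_cons.
  pose proof (w_pos s). lra. Qed.

Lemma wt_nonneg o : 0 <= wt o.
Proof. destruct o; simpl. left; apply (w_pos l). lra. Qed.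

Lemma wt_some s : wt (Some s) = w s.
Proof. reflexivity. Qed.

Definition sumL {T} (h : T -> R) (l : list T) : R :=
  fold_right (fun t a => h t + a) 0 l.

Lemma sumL_app {T} (h : T -> R) l1 l2 : sumL h (l1 ++ l2) = sumL h l1 + sumL h l2.
Proof. induction l1; simpl; [lra|]. rewrite IHl1; lra. Qed.

Lemma sumL_map {T U} (h : U -> R) (g : T -> U) l : sumL h (map g l) = sumL (fun t => h (g t)) l.
Proof. induction l; simpl; [lra|]. rewrite IHl; lra. Qed.

Lemma sumL_nonneg {T} (h : T -> R) l : (forall t, 0 <= h t) -> 0 <= sumL h l.
Proof. intro H; induction l; simpl; [lra|]. specialize (H a); lra. Qed.

Lemma sumL_le {T} (h g : T -> R) l : (forall t, h t <= g t) -> sumL h l <= sumL g l.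
Proof. intro H; induction l; simpl; [lra|]. specialize (H a); lra. Qed.

Lemma sumL_plus {T} (h g : T -> R) l : sumL (fun t => h t + g t) l = sumL h l + sumL g l.
Proof. induction l; simpl; [lra|]. rewrite IHl; lra. Qed.

Lemma sumL_scal {T} (h : T -> R) c l : sumL (fun t => c * h t) l = c * sumL h l.
Proof. induction l; simpl; [lra|]. rewrite IHl; lra. Qed.

Lemma sumL_member {T} (h : T -> R) l a : (forall t, 0 <= h t) -> In a l -> h a <= sumL h l.
Proof. intros H Ha; induction l; simpl in *; [contradiction|].
  destruct Ha as [<-|Ha]. pose proof (sumL_nonneg h l H); lra.
  specialize (IHl Ha). specialize (H a0); lra. Qed.

Lemma sumL_incl {T} (h : T -> R) (l1 l2 : list T) :
  (forall t, 0 <= h t) -> NoDup l1 -> incl l1 l2 -> sumL h l1 <= sumL h l2.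
Proof.
  intros H; revert l2; induction l1 as [|a l1 IH]; intros l2 ND Inc.
  - simpl. apply sumL_nonneg; auto.
  - inversion ND; subst.
    assert (Ha : In a l2) by (apply Inc; left; auto).
    destruct (in_split _ _ Ha) as [l2a [l2b E]]; subst.
    assert (Inc' : incl l1 (l2a ++ l2b)).
    { intros t Ht. assert (t <> a) by (intro; subst; contradiction).
      assert (In t (l2a ++ a :: l2b)) by (apply Inc; right; auto).
      apply in_app_iff in H1. apply in_app_iff. destruct H1 as [?|[?|?]]; auto.
      congruence. }
    specialize (IH _ H3 Inc'). rewrite !sumL_app in *. simpl. lra.
Qed.

Lemma sum_f_R0_sumL h n : sum_f_R0 h n = sumL h (seq 0 (S n)).
Proof. induction n. simpl; lra.
  rewrite seq_S, sumL_app. simpl sum_f_R0. rewrite IHn. simpl. lra. Qed.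

Lemma sum_f_R0_mono h n m : (forall k, 0 <= h k) -> (n <= m)%nat -> sum_f_R0 h n <= sum_f_R0 h m.
Proof. intros H Hnm; induction Hnm. lra. simpl. specialize (H (S m)); lra. Qed.

Lemma sum_f_R0_nonneg h n : (forall k, 0 <= h k) -> 0 <= sum_f_R0 h n.
Proof. intros H; induction n; simpl. apply H. specialize (H (S n)); lra. Qed.

Lemma sumL_prod {T U} (h : T * U -> R) l1 l2 :
  sumL h (list_prod l1 l2) = sumL (fun a => sumL (fun b => h (a, b)) l2) l1.
Proof. induction l1; simpl; [lra|]. rewrite sumL_app, sumL_map, IHl1. lra. Qed.

Lemma NoDup_map_inj {T U} (f : T -> U) l : (forall a b, f a = f b -> a = b) -> NoDup l -> NoDup (map f l).
Proof. intros Hi ND; induction ND; simpl; constructor; auto.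
  intro Hin. apply in_map_iff in Hin. destruct Hin as [y [Hy Hy']].
  apply Hi in Hy; subst; contradiction. Qed.

Lemma geom_sum n : sum_f_R0 (fun k => / 2 ^ (S k)) n = 1 - / 2 ^ (S n).
Proof. induction n. simpl. lra.
  change (sum_f_R0 (fun k => / 2 ^ S k) (S n)) with (sum_f_R0 (fun k => / 2 ^ S k) n + / 2 ^ (S (S n))).
  rewrite IHn. simpl. field. apply pow_nonzero; lra. Qed.

Lemma le_eps_le a b : (forall eps, 0 < eps -> a <= b + eps) -> a <= b.
Proof. intros H. destruct (Rle_dec a b); auto. exfalso.
  specialize (H ((a - b)/2)). lra. Qed.
Definition covers (A : cset) (f : nat -> option (list bool)) :=
  forall x, A x -> exists n s, f n = Some s /\ N s x.
Definition bnd (f : nat -> option (list bool)) (r : R) :=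
  forall n, sum_f_R0 (fun i => wt (f i)) n <= r.

Lemma admissible_ge0 A r : admissible A r -> 0 <= r.
Proof. intros [f [_ H]]. specialize (H 0%nat). simpl in H. pose proof (wt_nonneg (f 0%nat)). lra. Qed.

Lemma admissible_full A : admissible A 1.
Proof.
  exists (fun n => match n with 0%nat => Some [] | _ => None end). split.
  - intros x _. exists 0%nat, []. split; auto. intros i Hi; simpl in Hi; lia.
  - intro n. induction n. simpl. rewrite Rinv_1. lra. simpl. lra.
Qed.

Lemma outer_lub A : is_lub (fun y => admissible A (- y)) (- outer A).
Proof.
  unfold outer. rewrite Ropp_involutive.
  match goal with |- is_lub ?P (epsilon ?i ?Q) => apply (epsilon_spec i Q) end.
  assert (Hb : bound (fun y => admissible A (- y))).
  { exists 0. intros y Hy. apply admissible_ge0 in Hy. lra. }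
  assert (Hn : exists y, admissible A (- y)).
  { exists (Ropp 1). rewrite Ropp_involutive. apply admissible_full. }
  destruct (completeness _ Hb Hn) as [m Hm]. exists m; exact Hm.
Qed.

Lemma outer_le A r : admissible A r -> outer A <= r.
Proof. intro H. destruct (outer_lub A) as [Hu _].
  assert (admissible A (- - r)) by (rewrite Ropp_involutive; auto).
  specialize (Hu _ H0). lra. Qed.

Lemma outer_ge A X : (forall r, admissible A r -> X <= r) -> X <= outer A.
Proof. intro H. destruct (outer_lub A) as [_ Hl].
  assert (is_upper_bound (fun y => admissible A (- y)) (- X)).
  { intros y Hy. specialize (H _ Hy). lra. }
  specialize (Hl _ H0). lra. Qed.

Lemma outer_nonneg A : 0 <= outer A.
Proof. apply outer_ge. apply admissible_ge0. Qed.

Lemma outer_approx A eps : 0 < eps -> exists f, covers A f /\ bnd f (outer A + eps).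
Proof.
  intro He. apply NNPP; intro C.
  assert (forall r, admissible A r -> outer A + eps <= r).
  { intros r [f [Hc Hb]]. destruct (Rle_dec (outer A + eps) r) as [?|Hn]; auto.
    exfalso; apply C. exists f; split; auto. intro m. specialize (Hb m). lra. }
  apply outer_ge in H. lra.
Qed.

Lemma outer_cover_le A f r : covers A f -> bnd f r -> outer A <= r.
Proof. intros; apply outer_le; exists f; auto. Qed.

Lemma outer_mono (A B : cset) : (forall x, A x -> B x) -> outer A <= outer B.
Proof. intro H. apply outer_ge. intros r [f [Hc Hb]]. apply outer_le.
  exists f; split; [|auto]. intros x Hx; apply Hc, H, Hx. Qed.

Lemma outer_ext A B : set_eq A B -> outer A = outer B.
Proof. intro H; apply Rle_antisym; apply outer_mono; intro x; apply H. Qed.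

Lemma outer_empty (A : cset) : (forall x, ~ A x) -> outer A = 0.
Proof. intro H. apply Rle_antisym; [|apply outer_nonneg]. apply outer_le.
  exists (fun _ => None). split. intros x Hx; exfalso; exact (H x Hx).
  intro n; induction n; simpl in *; lra. Qed.

Lemma outer_cyl_le (A : cset) s : (forall x, A x -> N s x) -> outer A <= w s.
Proof. intro H. apply outer_le.
  exists (fun n => match n with 0%nat => Some s | _ => None end). split.
  - intros x Hx. exists 0%nat, s; auto.
  - intro n; induction n; simpl; [unfold w; lra|lra].
Qed.

Lemma outer_csub (A : nat -> cset) (B : cset) (M : R) :
  (forall x, B x -> exists k, A k x) ->
  (forall n, sum_f_R0 (fun k => outer (A k)) n <= M) -> outer B <= M.
Proof.
  intros Hcov HM. apply le_eps_le. intros eps He.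
  assert (Hf : forall k, exists f, covers (A k) f /\ bnd f (outer (A k) + eps * / 2 ^ (S k))).
  { intro k. apply outer_approx. apply Rmult_lt_0_compat; auto.
    apply Rinv_0_lt_compat, pow_lt; lra. }
  pose (F := fun k => proj1_sig (constructive_indefinite_description _ (Hf k))).
  assert (HF : forall k, covers (A k) (F k) /\ bnd (F k) (outer (A k) + eps * / 2 ^ (S k))).
  { intro k. unfold F. destruct (constructive_indefinite_description _ (Hf k)); auto. }
  pose (h := fun p : nat * nat => wt (F (fst p) (snd p))).
  apply outer_le. exists (fun n => F (fst (Cantor.of_nat n)) (snd (Cantor.of_nat n))). split.
  - intros x Hx. destruct (Hcov x Hx) as [k Hk]. destruct (proj1 (HF k) x Hk) as [i [s [E1 E2]]].
    exists (Cantor.to_nat (k, i)), s. rewrite Cantor.cancel_of_to. simpl. auto.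
  - intro n. rewrite sum_f_R0_sumL.
    change (sumL (fun i => h (Cantor.of_nat i)) (seq 0 (S n)) <= M + eps).
    rewrite <- sumL_map.
    apply Rle_trans with (sumL h (list_prod (seq 0 (S n)) (seq 0 (S n)))).
    + apply sumL_incl. intro; apply wt_nonneg.
      apply NoDup_map_inj. intros a b E. rewrite <- (Cantor.cancel_to_of a), <- (Cantor.cancel_to_of b), E; auto.
      apply seq_NoDup.
      intros p Hp. apply in_map_iff in Hp. destruct Hp as [m [<- Hm]].
      apply in_seq in Hm. destruct (Cantor.of_nat m) as [a b] eqn:E.
      pose proof (Cantor.to_nat_non_decreasing a b). rewrite <- E, Cantor.cancel_to_of in H.
      apply in_prod_iff; split; apply in_seq; lia.
    + rewrite sumL_prod.
      apply Rle_trans with (sumL (fun a => outer (A a) + eps * / 2 ^ (S a)) (seq 0 (S n))).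
      * apply sumL_le. intro a. pose proof (proj2 (HF a) n) as Ha. rewrite sum_f_R0_sumL in Ha. exact Ha.
      * rewrite sumL_plus, <- !sum_f_R0_sumL. specialize (HM n).
        rewrite (sum_f_R0_sumL (fun t => eps * _)), sumL_scal, <- sum_f_R0_sumL, geom_sum.
        assert (0 < / 2 ^ S n) by (apply Rinv_0_lt_compat, pow_lt; lra).
        nra.
Qed.

Lemma outer_sub2 (A B : cset) : outer (fun x => A x \/ B x) <= outer A + outer B.
Proof.
  apply outer_csub with (A := fun k => match k with 0%nat => A | 1%nat => B | _ => fun _ => False end).
  - intros x [H|H]; [exists 0%nat | exists 1%nat]; auto.
  - set (g := fun k => outer (match k with 0%nat => A | 1%nat => B | _ => fun _ => False end)).
    assert (Hs : forall n, sum_f_R0 g (S n) = outer A + outer B).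
    { induction n. reflexivity.
      change (sum_f_R0 g (S (S n))) with (sum_f_R0 g (S n) + g (S (S n))). rewrite IHn.
      assert (g (S (S n)) = 0) by (unfold g; apply outer_empty; auto). lra. }
    intros [|n]. change (sum_f_R0 g 0) with (outer A). pose proof (outer_nonneg B). lra. rewrite Hs. lra.
Qed.

Lemma outer_sub2' (A B C : cset) : (forall x, C x -> A x \/ B x) -> outer C <= outer A + outer B.
Proof. intro H. eapply Rle_trans; [|apply outer_sub2]. apply outer_mono; auto. Qed.
Lemma N_nil x : N [] x.
Proof. intros i Hi; simpl in Hi; lia. Qed.

Definition consb (b : bool) (x : Cantor) : Cantor := fun i => match i with 0%nat => b | S j => x j end.

Lemma N_cons b u x : N (b :: u) x <-> x 0%nat = b /\ N u (fun i => x (S i)).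
Proof. split.
  - intro H. split. symmetry; apply (H 0%nat); simpl; lia.
    intros i Hi. apply (H (S i)); simpl; lia.
  - intros [H1 H2] [|i] Hi; simpl. auto. apply H2. simpl in Hi; lia.
Qed.

Lemma nth_restr x n i d : (i < n)%nat -> nth i (restr x n) d = x i.
Proof. intro H. unfold restr. rewrite nth_indep with (d' := x 0%nat).
  rewrite map_nth, seq_nth; auto. rewrite length_map, length_seq; auto. Qed.

Lemma length_restr x n : length (restr x n) = n.
Proof. unfold restr. rewrite length_map, length_seq; auto. Qed.

Lemma N_iff_restr s x : N s x <-> restr x (length s) = s.
Proof. split.
  - intro H. apply nth_ext with (d := false) (d' := false). rewrite length_restr; auto.
    intros i Hi. rewrite length_restr in Hi. rewrite nth_restr; auto. symmetry; apply H; auto.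
  - intros H i Hi. rewrite <- H. rewrite nth_restr; auto.
Qed.

Lemma N_restr x n : N (restr x n) x.
Proof. apply N_iff_restr. rewrite length_restr; auto. Qed.

Lemma restr_eq_iff x y n : restr x n = restr y n <-> (forall i, (i < n)%nat -> x i = y i).
Proof. split.
  - intros H i Hi. rewrite <- (nth_restr x n i false), <- (nth_restr y n i false), H; auto.
  - intro H. unfold restr. apply map_ext_in. intros a Ha. apply in_seq in Ha. apply H; lia.
Qed.

Lemma N_restr_eq x y n : N (restr x n) y -> restr y n = restr x n.
Proof. intro H. apply N_iff_restr in H. rewrite length_restr in H. auto. Qed.

Lemma N_same_len a b y : N a y -> N b y -> length a = length b -> a = b.
Proof. intros Ha Hb E. apply N_iff_restr in Ha, Hb. rewrite <- Ha, <- Hb, E; auto. Qed.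

Lemma N_snoc t x : N t x -> N (t ++ [x (length t)]) x.
Proof. intros H i Hi. rewrite length_app in Hi; simpl in Hi.
  destruct (Nat.lt_ge_cases i (length t)).
  - rewrite app_nth1; auto.
  - assert (i = length t) by lia. subst. rewrite app_nth2, Nat.sub_diag; auto.
Qed.

Lemma restr_S x n : restr x (S n) = restr x n ++ [x n].
Proof. unfold restr. rewrite seq_S, map_app. reflexivity. Qed.

Definition prefix (u t : list bool) := exists r, t = u ++ r.

Lemma prefix_N u t x : prefix u t -> N t x -> N u x.
Proof. intros [r ->] H i Hi. rewrite <- H. rewrite app_nth1; auto. rewrite length_app; lia. Qed.

Lemma prefix_len u t : prefix u t -> (length u <= length t)%nat.
Proof. intros [r ->]. rewrite length_app; lia. Qed.

Lemma prefix_eq u t : prefix u t -> length u = length t -> u = t.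
Proof. intros [r ->] E. rewrite length_app in E. destruct r; [rewrite app_nil_r; auto|simpl in E; lia]. Qed.

Lemma prefix_restr x m n : (m <= n)%nat -> prefix (restr x m) (restr x n).
Proof. intro H. exists (map x (seq m (n - m))). unfold restr.
  rewrite <- map_app. f_equal. replace n with (m + (n - m))%nat at 1 by lia.
  rewrite seq_app. reflexivity. Qed.

Lemma restr_prefix_N t x : N t x -> t = restr x (length t).
Proof. intro H. apply N_iff_restr in H. auto. Qed.

Definition sumW (L : list (list bool)) := sumL w L.

Lemma sumW_nonneg L : 0 <= sumW L.
Proof. apply sumL_nonneg. intro; left; apply w_pos. Qed.

Definition tails (b : bool) (L : list (list bool)) : list (list bool) :=
  flat_map (fun u => match u with [] => [] | c :: u' => if Bool.eqb b c then [u'] else [] end) L.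

Lemma in_tails b L u : In u (tails b L) <-> In (b :: u) L.
Proof. unfold tails. rewrite in_flat_map. split.
  - intros [v [Hv Hu]]. destruct v as [|c v]; [contradiction|].
    destruct (Bool.eqb b c) eqn:E; [|contradiction]. apply Bool.eqb_prop in E; subst.
    destruct Hu as [<-|[]]; auto.
  - intro H. exists (b :: u). split; auto. rewrite Bool.eqb_reflx. left; auto.
Qed.

Lemma sumW_tails L : ~ In [] L -> sumW L = (sumW (tails false L) + sumW (tails true L)) / 2.
Proof. unfold sumW. induction L as [|u L IH]; intro H. simpl; lra.
  assert (H' : ~ In [] L) by (intro; apply H; right; auto).
  destruct u as [|c u]. exfalso; apply H; left; auto.
  specialize (IH H'). simpl. destruct c; simpl; rewrite IH; rewrite w_cons; lra.
Qed.

Lemma len_bound (L : list (list bool)) : exists k, forall u, In u L -> (length u <= k)%nat.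
Proof. induction L as [|a L [k Hk]]. exists 0%nat; intros u [].
  exists (Nat.max k (length a)). intros u [<-|Hu]. lia. specialize (Hk u Hu); lia. Qed.

Lemma cover0 k : forall L, (forall u, In u L -> (length u <= k)%nat) ->
  (forall x, exists u, In u L /\ N u x) -> 1 <= sumW L.
Proof.
  induction k as [|k IH]; intros L Hl Hc.
  - destruct (Hc (fun _ => false)) as [u [Hu _]]. specialize (Hl u Hu).
    destruct u; [|simpl in Hl; lia].
    rewrite <- w_nil. apply sumL_member; auto. intro; left; apply w_pos.
  - destruct (classic (In [] L)) as [Hn|Hn].
    + rewrite <- w_nil. apply sumL_member; auto. intro; left; apply w_pos.
    + rewrite sumW_tails; auto.
      assert (forall b, 1 <= sumW (tails b L)).
      { intro b. apply IH.
        - intros u Hu. apply in_tails in Hu. specialize (Hl _ Hu). simpl in Hl; lia.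
        - intro x. destruct (Hc (consb b x)) as [u [Hu Hux]].
          destruct u as [|c u]; [contradiction|]. apply N_cons in Hux. destruct Hux as [E Hux].
          simpl in E. subst. exists u. split; auto. apply in_tails; auto. }
      pose proof (H false); pose proof (H true). lra.
Qed.

Lemma cover_lemma s : forall L, (forall x, N s x -> exists u, In u L /\ N u x) -> w s <= sumW L.
Proof.
  induction s as [|b s IH]; intros L Hc.
  - rewrite w_nil. destruct (len_bound L) as [k Hk]. apply (cover0 k); auto.
    intro x; apply Hc, N_nil.
  - destruct (classic (In [] L)) as [Hn|Hn].
    + apply Rle_trans with 1. apply w_le1. rewrite <- w_nil. apply sumL_member; auto. intro; left; apply w_pos.
    + rewrite sumW_tails; auto. rewrite w_cons.
      assert (w s <= sumW (tails b L)).
      { apply IH. intros y Hy. destruct (Hc (consb b y)) as [u [Hu Hux]].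
        apply N_cons. split; auto.
        destruct u as [|c u]; [contradiction|]. apply N_cons in Hux. destruct Hux as [E Hux].
        simpl in E. subst. exists u. split; auto. apply in_tails; auto. }
      pose proof (sumW_nonneg (tails false L)). pose proof (sumW_nonneg (tails true L)).
      destruct b; lra.
Qed.

Definition PF (L : list (list bool)) := NoDup L /\ forall u v, In u L -> In v L -> prefix u v -> u = v.

Lemma PF_tails b L : PF L -> PF (tails b L).
Proof. intros [ND H]. split.
  - induction ND as [|u L Hu ND IHND]. constructor.
    assert (IH' : NoDup (tails b L)).
    { apply IHND. intros u0 v0 H1 H2. apply H; right; auto. }
    unfold tails; simpl. destruct u as [|c u]; simpl; auto.
    destruct (Bool.eqb b c) eqn:E; simpl; auto. apply Bool.eqb_prop in E; subst.
    constructor; auto. intro Hin. apply (in_tails c) in Hin. contradiction.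
  - intros u v Hu Hv [r Hr]. apply in_tails in Hu, Hv.
    assert (b :: u = b :: v). { apply H; auto. exists r. subst; auto. }
    congruence.
Qed.

Lemma all_eq_sum (L : list (list bool)) a : (forall v, In v L -> v = a) -> NoDup L -> sumW L <= w a.
Proof. intros H ND. destruct L as [|b L]. unfold sumW; simpl. left; apply w_pos.
  destruct L as [|c L]. unfold sumW; simpl. rewrite (H b); [lra|left; auto].
  inversion ND; subst. exfalso. apply H2. rewrite (H b), (H c); simpl; auto. Qed.

Lemma kraft0 k : forall L, (forall u, In u L -> (length u <= k)%nat) -> PF L -> sumW L <= 1.
Proof.
  induction k as [|k IH]; intros L Hl HP.
  - destruct (classic (In [] L)) as [Hn|Hn].
    + rewrite <- w_nil. apply all_eq_sum. intros v Hv. symmetry. apply (proj2 HP); auto. exists v; auto.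
      apply HP.
    + destruct L as [|u L]. unfold sumW; simpl; lra.
      specialize (Hl u (or_introl eq_refl)). destruct u; [exfalso; apply Hn; left; auto|simpl in Hl; lia].
  - destruct (classic (In [] L)) as [Hn|Hn].
    + rewrite <- w_nil. apply all_eq_sum. intros v Hv. symmetry. apply (proj2 HP); auto. exists v; auto.
      apply HP.
    + rewrite sumW_tails; auto.
      assert (forall b, sumW (tails b L) <= 1).
      { intro b. apply IH. intros u Hu. apply in_tails in Hu. specialize (Hl _ Hu). simpl in Hl; lia.
        apply PF_tails; auto. }
      pose proof (H false); pose proof (H true). lra.
Qed.

Lemma kraft u : forall L, (forall t, In t L -> prefix u t) -> PF L -> sumW L <= w u.
Proof.
  induction u as [|b u IH]; intros L Hp HP.
  - rewrite w_nil. destruct (len_bound L) as [k Hk]. apply (kraft0 k); auto.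
  - assert (Hn : ~ In [] L). { intro H. destruct (Hp _ H) as [r Hr]. discriminate. }
    rewrite sumW_tails; auto. rewrite w_cons.
    assert (H1 : sumW (tails b L) <= w u).
    { apply IH. intros t Ht. apply in_tails in Ht. destruct (Hp _ Ht) as [r Hr].
      exists r. simpl in Hr. congruence. apply PF_tails; auto. }
    assert (H2 : sumW (tails (negb b) L) = 0).
    { destruct (tails (negb b) L) as [|t L'] eqn:E. reflexivity.
      exfalso. assert (In t (tails (negb b) L)) by (rewrite E; left; auto).
      apply in_tails in H. destruct (Hp _ H) as [r Hr]. simpl in Hr. destruct b; discriminate. }
    destruct b; simpl in H2; lra.
Qed.
Definition coveredn (f : nat -> option (list bool)) n x :=
  exists i u, (i <= n)%nat /\ f i = Some u /\ N u x.
Definition good f s t := forall n, exists x, N t x /\ N s x /\ ~ coveredn f n x.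

Fixpoint path f s k : list bool :=
  match k with
  | 0%nat => []
  | S k => let t := path f s k in
      if excluded_middle_informative (good f s (t ++ [false])) then t ++ [false] else t ++ [true]
  end.

Lemma good_step f s t : good f s t -> good f s (t ++ [false]) \/ good f s (t ++ [true]).
Proof.
  intro H. apply NNPP; intro C. apply not_or_and in C. destruct C as [C0 C1].
  apply not_all_ex_not in C0, C1. destruct C0 as [n0 C0]. destruct C1 as [n1 C1].
  destruct (H (Nat.max n0 n1)) as [x [Hx [Hs Hc]]]. apply Hc.
  destruct (x (length t)) eqn:E.
  - apply NNPP; intro Hc'. apply C1. exists x. split; [rewrite <- E; apply N_snoc; auto|]. split; auto.
    intros [i [u [Hi [Hf Hu]]]]. apply Hc'. exists i, u. split; [lia|auto].
  - apply NNPP; intro Hc'. apply C0. exists x. split; [rewrite <- E; apply N_snoc; auto|]. split; auto.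
    intros [i [u [Hi [Hf Hu]]]]. apply Hc'. exists i, u. split; [lia|auto].
Qed.

Lemma path_good f s : good f s [] -> forall k, good f s (path f s k).
Proof. intros H0 k. induction k. auto. simpl.
  destruct (excluded_middle_informative _) as [G|G]; auto.
  destruct (good_step _ _ _ IHk); [contradiction|auto]. Qed.

Lemma path_len f s k : length (path f s k) = k.
Proof. induction k; simpl; auto. destruct (excluded_middle_informative _);
  rewrite length_app, IHk; simpl; lia. Qed.

Lemma path_nth f s k i : (i < k)%nat -> nth i (path f s k) false = nth i (path f s (S i)) false.
Proof. induction k; intro H. lia.
  destruct (Nat.eq_dec i k). subst; auto.
  rewrite <- IHk by lia. simpl.
  destruct (excluded_middle_informative _); rewrite app_nth1; auto; rewrite path_len; lia.
Qed.

Lemma compact (s : list bool) (f : nat -> option (list bool)) :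
  covers (N s) f -> exists n, forall x, N s x -> coveredn f n x.
Proof.
  intro Hcov. apply NNPP; intro C.
  assert (G0 : good f s []).
  { intro n. apply NNPP; intro C'. apply C. exists n. intros x Hx. apply NNPP; intro C''.
    apply C'. exists x. split; [apply N_nil|auto]. }
  pose (x := fun i => nth i (path f s (S i)) false).
  assert (Hx : forall k, N (path f s k) x).
  { intros k i Hi. rewrite path_len in Hi. unfold x. apply path_nth; auto. }
  assert (Hs : N s x).
  { destruct (path_good f s G0 (length s) 0%nat) as [y [Hy1 [Hy2 _]]].
    assert (path f s (length s) = s) by (apply (N_same_len _ _ y); auto; apply path_len).
    rewrite <- H; auto. }
  destruct (Hcov x Hs) as [n [u [Hf Hu]]].
  destruct (path_good f s G0 (length u) n) as [y [Hy1 [Hy2 Hy3]]].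
  assert (path f s (length u) = u) by (apply (N_same_len _ _ x); auto; apply path_len).
  apply Hy3. exists n, u. split; auto. split; auto. rewrite <- H; auto.
Qed.

Definition somes (f : nat -> option (list bool)) (l : list nat) : list (list bool) :=
  flat_map (fun i => match f i with Some u => [u] | None => [] end) l.

Lemma sumW_somes f l : sumW (somes f l) = sumL (fun i => wt (f i)) l.
Proof. unfold sumW, somes. induction l; simpl; auto. rewrite sumL_app, IHl.
  destruct (f a); simpl; unfold w; lra. Qed.

Lemma outer_N s : outer (N s) = w s.
Proof.
  apply Rle_antisym. apply outer_cyl_le; auto.
  apply outer_ge. intros r [f [Hc Hb]].
  destruct (compact s f Hc) as [n Hn].
  specialize (Hb n). rewrite sum_f_R0_sumL, <- sumW_somes in Hb.
  eapply Rle_trans; [|exact Hb]. apply cover_lemma.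
  intros x Hx. destruct (Hn x Hx) as [i [u [Hi [Hf Hu]]]]. exists u. split; auto.
  unfold somes. apply in_flat_map. exists i. split. apply in_seq; lia. rewrite Hf; left; auto.
Qed.

Lemma outer_N_restr x n : outer (N (restr x n)) = / 2 ^ n.
Proof. rewrite outer_N. unfold w. rewrite length_restr. auto. Qed.
Definition dbl (i : nat) (f : nat -> option (list bool)) (n : nat) : option (list bool) :=
  match f (Nat.div2 n) with
  | Some s => if (length s <=? i)%nat then Some (s ++ [Nat.odd n])
              else (if Nat.odd n then None else Some s)
  | None => None
  end.

Lemma sum_pairs g m : sum_f_R0 g (2 * m + 1) = sum_f_R0 (fun k => g (2 * k)%nat + g (2 * k + 1)%nat) m.
Proof. induction m. simpl; lra.
  replace (2 * S m + 1)%nat with (S (S (2 * m + 1))) by lia.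
  change (sum_f_R0 g (S (S (2 * m + 1)))) with (sum_f_R0 g (2 * m + 1) + g (S (2 * m + 1)) + g (S (S (2 * m + 1)))).
  rewrite IHm. set (F := fun k => g (2 * k)%nat + g (2 * k + 1)%nat).
  change (sum_f_R0 F (S m)) with (sum_f_R0 F m + F (S m)). unfold F at 3.
  replace (S (S (2 * m + 1))) with (2 * S m + 1)%nat by lia.
  replace (S (2 * m + 1)) with (2 * S m)%nat by lia. lra.
Qed.

Lemma dbl_pair i f m : wt (dbl i f (2 * m)) + wt (dbl i f (2 * m + 1)) = wt (f m).
Proof. unfold dbl.
  replace (Nat.div2 (2 * m + 1)) with m by (rewrite Nat.add_1_r, Nat.div2_succ_double; auto).
  rewrite Nat.div2_double, Nat.odd_even, Nat.odd_odd.
  destruct (f m) as [s|]; simpl; [|lra].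
  destruct (length s <=? i)%nat; simpl; [|lra].
  change (w (s ++ [false]) + w (s ++ [true]) = w s). rewrite !w_snoc. lra.
Qed.

Lemma dbl_bnd i f r : bnd f r -> bnd (dbl i f) r.
Proof. intros H n. apply Rle_trans with (sum_f_R0 (fun k => wt (dbl i f k)) (2 * n + 1)).
  apply sum_f_R0_mono. intro; apply wt_nonneg. lia.
  rewrite sum_pairs. eapply Rle_trans; [|apply (H n)]. right. apply sum_eq. intros; apply dbl_pair.
Qed.

Lemma dbl_covers i f A : covers A f -> covers A (dbl i f).
Proof. intros H x Hx. destruct (H x Hx) as [n [s [Hf Hs]]].
  destruct (length s <=? i)%nat eqn:E.
  - exists (if x (length s) then (2 * n + 1)%nat else (2 * n)%nat), (s ++ [x (length s)]).
    split; [|apply N_snoc; auto]. unfold dbl.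
    destruct (x (length s)).
    + replace (Nat.div2 (2 * n + 1)) with n by (rewrite Nat.add_1_r, Nat.div2_succ_double; auto).
      rewrite Hf, E, Nat.odd_odd. auto.
    + rewrite Nat.div2_double, Hf, E, Nat.odd_even. auto.
  - exists (2 * n)%nat, s. split; auto. unfold dbl. rewrite Nat.div2_double, Hf, E, Nat.odd_even. auto.
Qed.

Lemma dbl_len i f k : (forall n s, f n = Some s -> (k <= length s)%nat \/ (i < length s)%nat) ->
  forall n s, dbl i f n = Some s -> (S k <= length s)%nat \/ (i < length s)%nat.
Proof. intros H n s. unfold dbl. destruct (f (Nat.div2 n)) as [s0|] eqn:E; [|discriminate].
  specialize (H _ _ E). destruct (length s0 <=? i)%nat eqn:E2.
  - intro Hs. injection Hs as <-. rewrite length_app. simpl. apply Nat.leb_le in E2. lia.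
  - apply Nat.leb_gt in E2. destruct (Nat.odd n); [discriminate|]. intro Hs; injection Hs as <-. lia.
Qed.

Lemma refine i A f r : covers A f -> bnd f r ->
  exists g, covers A g /\ bnd g r /\ forall n s, g n = Some s -> (i < length s)%nat.
Proof.
  intros Hc Hb.
  assert (forall k, covers A (Nat.iter k (dbl i) f) /\ bnd (Nat.iter k (dbl i) f) r /\
      forall n s, Nat.iter k (dbl i) f n = Some s -> (k <= length s)%nat \/ (i < length s)%nat).
  { induction k as [|k [H1 [H2 H3]]]. split; auto. split; auto. intros; left; lia.
    simpl. split; [apply dbl_covers; auto|]. split; [apply dbl_bnd; auto|]. apply dbl_len; auto. }
  destruct (H (S i)) as [H1 [H2 H3]]. exists (Nat.iter (S i) (dbl i) f). split; auto. split; auto.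
  intros n s Hs. destruct (H3 n s Hs); lia.
Qed.

Lemma split_le (E P : cset) :
  (forall r, admissible E r -> exists g1 g2, covers (inter E P) g1 /\ covers (diff E P) g2 /\
     forall n, sum_f_R0 (fun k => wt (g1 k)) n + sum_f_R0 (fun k => wt (g2 k)) n <= r) ->
  outer (inter E P) + outer (diff E P) <= outer E.
Proof.
  intro H. apply outer_ge. intros r Hr. destruct (H r Hr) as [g1 [g2 [C1 [C2 Hs]]]].
  set (a := fun n => sum_f_R0 (fun k => wt (g1 k)) n).
  set (b := fun n => sum_f_R0 (fun k => wt (g2 k)) n).
  assert (Ha : forall n m, (n <= m)%nat -> a n <= a m) by (intros; apply sum_f_R0_mono; auto; intro; apply wt_nonneg).
  assert (Hb : forall n m, (n <= m)%nat -> b n <= b m) by (intros; apply sum_f_R0_mono; auto; intro; apply wt_nonneg).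
  assert (forall m, b m <= r - outer (inter E P)).
  { intro m. assert (outer (inter E P) <= r - b m); [|lra].
    apply (outer_cover_le _ g1); auto. intro n. fold (a n).
    destruct (Nat.le_ge_cases n m).
    - specialize (Ha _ _ H0). specialize (Hs m). fold (a m) (b m) in Hs. lra.
    - specialize (Hb _ _ H0). specialize (Hs n). fold (a n) (b n) in Hs. lra. }
  assert (outer (diff E P) <= r - outer (inter E P)); [|lra].
  apply (outer_cover_le _ g2); auto.
Qed.

Definition H_ (i : nat) : cset := fun x => x i = true.

Lemma meas_of_le A : (forall E, outer (inter E A) + outer (diff E A) <= outer E) -> measurable A.
Proof. intros H E. apply Rle_antisym; auto. apply outer_sub2'.
  intros x Hx. destruct (classic (A x)); [left|right]; split; auto. Qed.

Lemma meas_H i : measurable (H_ i).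
Proof.
  apply meas_of_le. intro E. apply split_le. intros r [f [Hc Hb]].
  destruct (refine i E f r Hc Hb) as [g [Gc [Gb Gl]]].
  exists (fun n => match g n with Some s => if nth i s false then Some s else None | None => None end).
  exists (fun n => match g n with Some s => if nth i s false then None else Some s | None => None end).
  split; [|split].
  - intros x [Hx Hi]. destruct (Gc x Hx) as [n [s [Hg Hs]]]. exists n, s. rewrite Hg.
    rewrite (Hs i (Gl _ _ Hg)). unfold H_ in Hi. rewrite Hi. auto.
  - intros x [Hx Hi]. destruct (Gc x Hx) as [n [s [Hg Hs]]]. exists n, s. rewrite Hg.
    rewrite (Hs i (Gl _ _ Hg)). unfold H_ in Hi. destruct (x i); [contradiction|auto].
  - intro n. rewrite <- sum_plus. eapply Rle_trans; [|apply (Gb n)]. right. apply sum_eq.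
    intros k _. destruct (g k); simpl; [|lra]. destruct (nth i l false); simpl; lra.
Qed.

Lemma meas_ext A B : set_eq A B -> measurable A -> measurable B.
Proof. intros H HA E. rewrite (HA E). f_equal; apply outer_ext; intro x; unfold inter, diff; rewrite (H x); tauto. Qed.

Lemma meas_compl A : measurable A -> measurable (compl A).
Proof. intros HA E. rewrite (HA E). rewrite Rplus_comm. f_equal; apply outer_ext; intro x; unfold inter, diff, compl;
  split; intros [H1 H2]; split; auto; try (apply NNPP; exact H2). Qed.

Lemma meas_union A B : measurable A -> measurable B -> measurable (fun x => A x \/ B x).
Proof.
  intros HA HB. apply meas_of_le. intro E.
  rewrite (HA E). rewrite (HB (diff E A)).
  assert (outer (inter E (fun x => A x \/ B x)) <= outer (inter E A) + outer (inter (diff E A) B)).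
  { apply outer_sub2'. intros x [Hx [Ha|Hb]]. left; split; auto.
    destruct (classic (A x)). left; split; auto. right; split; auto. split; auto. }
  assert (outer (diff E (fun x => A x \/ B x)) = outer (diff (diff E A) B)).
  { apply outer_ext. intro x; unfold diff; tauto. }
  lra.
Qed.

Lemma meas_inter A B : measurable A -> measurable B -> measurable (inter A B).
Proof. intros HA HB.
  apply meas_ext with (compl (fun x => compl A x \/ compl B x)).
  - intro x. unfold compl, inter. split. intro H. split; apply NNPP; tauto. tauto.
  - apply meas_compl, meas_union; apply meas_compl; auto.
Qed.

Lemma meas_empty : measurable (fun _ => False).
Proof. intro E. rewrite (outer_empty (inter E _)). rewrite Rplus_0_l. apply outer_ext.
  intro x; unfold diff; tauto. intros x [_ []]. Qed.

Lemma meas_cunion (A : nat -> cset) : (forall k, measurable (A k)) ->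
  (forall j k x, A j x -> A k x -> j = k) -> measurable (fun x => exists k, A k x).
Proof.
  intros HA Hd.
  set (Sn := fun n x => exists k, (k < n)%nat /\ A k x).
  assert (HS : forall n, measurable (Sn n)).
  { induction n as [|n IHn].
    { apply meas_ext with (fun _ => False). intro x; unfold Sn; split; [tauto|]. intros [k [Hk _]]; lia.
      apply meas_empty. }
    apply meas_ext with (fun x => Sn n x \/ A n x).
    intro x; unfold Sn; split. intros [[k [Hk Ha]]|Ha]. exists k; split; auto.
    exists n; split; auto. intros [k [Hk Ha]]. destruct (Nat.eq_dec k n). subst; right; auto. left; exists k; split; auto; lia.
    apply meas_union; auto. }
  assert (Hadd : forall E n, outer (inter E (Sn n)) = sumL (fun k => outer (inter E (A k))) (seq 0 n)).
  { intros E n. induction n. simpl. apply outer_empty. intros x [_ [k [Hk _]]]; lia.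
    rewrite seq_S, sumL_app. simpl. rewrite <- IHn. rewrite (HA n (inter E (Sn (S n)))).
    assert (outer (inter (inter E (Sn (S n))) (A n)) = outer (inter E (A n))).
    { apply outer_ext. intro x; unfold inter, Sn; split. tauto. intros [H1 H2]; split; auto. split; auto. exists n; split; auto. }
    assert (outer (diff (inter E (Sn (S n))) (A n)) = outer (inter E (Sn n))).
    { apply outer_ext. intro x; unfold inter, diff, Sn; split.
      intros [[H1 [k [Hk Ha]]] H2]. split; auto. exists k. split; auto. destruct (Nat.eq_dec k n); [subst; contradiction|lia].
      intros [H1 [k [Hk Ha]]]. split; [split; auto; exists k; split; auto|]. intro Hn. specialize (Hd _ _ _ Ha Hn). lia. }
    lra. }
  apply meas_of_le. intro E.
  assert (Hb : forall n, sumL (fun k => outer (inter E (A k))) (seq 0 n) + outer (diff E (fun x => exists k, A k x)) <= outer E).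
  { intro n. rewrite (HS n E), <- Hadd. assert (outer (diff E (fun x => exists k, A k x)) <= outer (diff E (Sn n))); [|lra].
    apply outer_mono. intros x [H1 H2]. split; auto. intros [k [_ Hk]]. apply H2; exists k; auto. }
  assert (outer (inter E (fun x => exists k, A k x)) <= outer E - outer (diff E (fun x => exists k, A k x))); [|lra].
  apply outer_csub with (A := fun k => inter E (A k)).
  - intros x [Hx [k Hk]]. exists k; split; auto.
  - intro n. rewrite sum_f_R0_sumL. specialize (Hb (S n)). lra.
Qed.
Fixpoint p2l (p : positive) : list bool :=
  match p with xH => [] | xO p => false :: p2l p | xI p => true :: p2l p end.
Fixpoint l2p (l : list bool) : positive :=
  match l with [] => xH | false :: l => xO (l2p l) | true :: l => xI (l2p l) end.
Lemma p2l_l2p l : p2l (l2p l) = l.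
Proof. induction l as [|[|] l IH]; simpl; congruence. Qed.
Lemma l2p_p2l p : l2p (p2l p) = p.
Proof. induction p; simpl; congruence. Qed.

Definition en (n : nat) : list bool := p2l (Pos.of_succ_nat n).
Lemma en_inj a b : en a = en b -> a = b.
Proof. unfold en. intro H. apply (f_equal l2p) in H. rewrite !l2p_p2l in H. apply SuccNat2Pos.inj; auto. Qed.
Lemma en_surj t : exists k, en k = t.
Proof. exists (Init.Nat.pred (Pos.to_nat (l2p t))). unfold en.
  rewrite SuccNat2Pos.inv with (p := l2p t). apply p2l_l2p.
  pose proof (Pos2Nat.is_pos (l2p t)). lia. Qed.

Lemma least (P : nat -> Prop) : (exists n, P n) -> exists n, P n /\ forall m, (m < n)%nat -> ~ P m.
Proof. intros [n Hn]. induction n as [n IH] using lt_wf_ind.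
  destruct (classic (exists m, (m < n)%nat /\ P m)) as [[m [Hm Pm]]|No].
  - apply (IH m); auto.
  - exists n. split; auto. intros m Hm Pm. apply No. exists m; auto. Qed.

Lemma sum_f_R0_le a b n : (forall k, a k <= b k) -> sum_f_R0 a n <= sum_f_R0 b n.
Proof. intro H. rewrite !sum_f_R0_sumL. apply sumL_le; auto. Qed.

Lemma sum_f_R0_scal (a : nat -> R) c n : sum_f_R0 (fun k => c * a k) n = c * sum_f_R0 a n.
Proof. rewrite !sum_f_R0_sumL. apply sumL_scal. Qed.

Lemma sum_f_R0_zero n : sum_f_R0 (fun _ => 0) n = 0.
Proof. induction n; simpl; lra. Qed.

Definition rat (A : cset) (s : list bool) : R := outer (inter A (N s)) / outer (N s).

Lemma rat_le1 A s : rat A s <= 1.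
Proof. unfold rat. rewrite outer_N. pose proof (w_pos s).
  assert (outer (inter A (N s)) <= w s). { rewrite <- outer_N. apply outer_mono. intros x [_ Hx]; auto. }
  apply Rmult_le_reg_r with (w s); auto. unfold Rdiv. rewrite Rmult_assoc, Rinv_l; lra. Qed.

Lemma rat_nonneg A s : 0 <= rat A s.
Proof. unfold rat. rewrite outer_N. pose proof (w_pos s). pose proof (outer_nonneg (inter A (N s))).
  unfold Rdiv. apply Rmult_le_pos; auto. left; apply Rinv_0_lt_compat; auto. Qed.

Definition bad C q t := outer (inter C (N t)) < q * w t.
Definition Sset C q : cset := fun x => C x /\ forall m, exists n, (m <= n)%nat /\ bad C q (restr x n).
Definition Mset C q u t := prefix u t /\ bad C q t /\
  forall t', prefix u t' -> prefix t' t -> t' <> t -> ~ bad C q t'.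

Lemma bad_local C q u : 0 <= q -> outer (inter (Sset C q) (N u)) <= q * w u.
Proof.
  intro Hq.
  apply outer_csub with (A := fun k => fun x => Mset C q u (en k) /\ C x /\ N (en k) x).
  - intros x [[Cx Hs] Hu].
    destruct (least (fun n => (length u <= n)%nat /\ bad C q (restr x n))) as [n0 [[H1 H2] H3]].
    { destruct (Hs (length u)) as [n [Hn Hb]]. exists n; auto. }
    destruct (en_surj (restr x n0)) as [k Hk]. exists k. rewrite Hk. split; [|split; auto; apply N_restr].
    split; [|split; auto].
    + rewrite (restr_prefix_N u x Hu). apply prefix_restr; auto.
    + intros t' Hut' Ht't Hne Hb. assert (Hx' : N t' x) by (eapply prefix_N; eauto; apply N_restr).
      pose proof (prefix_len _ _ Ht't). rewrite length_restr in H.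
      assert (length t' <> n0). { intro E. apply Hne. apply prefix_eq; auto. rewrite length_restr; auto. }
      apply (H3 (length t')). lia. split. apply prefix_len; auto.
      rewrite <- (restr_prefix_N t' x Hx'). auto.
  - assert (Hind : forall n, exists L, NoDup L /\ (forall t, In t L -> Mset C q u t) /\
        (forall t, In t L -> exists k, (k <= n)%nat /\ t = en k) /\
        sum_f_R0 (fun k => outer (fun x => Mset C q u (en k) /\ C x /\ N (en k) x)) n <= q * sumW L).
    { assert (Hterm : forall k, Mset C q u (en k) -> outer (fun x => Mset C q u (en k) /\ C x /\ N (en k) x) <= q * w (en k)).
      { intros k [_ [Hb _]]. left. eapply Rle_lt_trans; [|exact Hb]. apply outer_mono. intros x [_ H]; exact H. }
      assert (Hz : forall k, ~ Mset C q u (en k) -> outer (fun x => Mset C q u (en k) /\ C x /\ N (en k) x) = 0).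
      { intros k Hk. apply outer_empty. intros x [H _]; auto. }
      induction n as [|n [L [ND [HM [Hk Hs]]]]].
      - destruct (classic (Mset C q u (en 0))) as [Hm|Hm].
        + exists [en 0%nat]. split; [constructor; auto; constructor|]. split. intros t [<-|[]]; auto.
          split. intros t [<-|[]]. exists 0%nat; auto. simpl. unfold sumW; simpl. specialize (Hterm _ Hm). lra.
        + exists []. split; [constructor|]. split. intros t []. split. intros t []. simpl. rewrite Hz; auto.
          unfold sumW; simpl; lra.
      - destruct (classic (Mset C q u (en (S n)))) as [Hm|Hm].
        + exists (en (S n) :: L). split. constructor; auto. intro Hin. destruct (Hk _ Hin) as [k [Hkn E]].
          apply en_inj in E. lia.
          split. intros t [<-|Ht]; auto. split. intros t [<-|Ht]. exists (S n); auto.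
          destruct (Hk _ Ht) as [k [? ?]]. exists k; split; auto.
          simpl sum_f_R0. unfold sumW in *; simpl. specialize (Hterm _ Hm). lra.
        + exists L. split; auto. split; auto. split. intros t Ht. destruct (Hk _ Ht) as [k [? ?]]. exists k; split; auto.
          simpl sum_f_R0. rewrite Hz; auto. lra. }
    intro n. destruct (Hind n) as [L [ND [HM [_ Hs]]]].
    eapply Rle_trans; [exact Hs|]. apply Rmult_le_compat_l; auto. apply kraft.
    + intros t Ht. apply HM; auto.
    + split; auto. intros a b Ha Hb Hab. apply NNPP; intro Hne.
      destruct (HM a Ha) as [Hua [Hba _]]. destruct (HM b Hb) as [_ [_ Hmin]].
      apply (Hmin a); auto.
Qed.

Lemma bad_null C q : 0 <= q < 1 -> outer (Sset C q) = 0.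
Proof.
  intro Hq. apply Rle_antisym; [|apply outer_nonneg].
  assert (forall eps, 0 < eps -> outer (Sset C q) <= q * outer (Sset C q) + eps).
  { intros eps He. destruct (outer_approx (Sset C q) eps He) as [f [Hc Hb]].
    apply Rle_trans with (q * (outer (Sset C q) + eps)); [|nra].
    apply outer_csub with (A := fun j => match f j with Some u => inter (Sset C q) (N u) | None => fun _ => False end).
    - intros x Hx. destruct (Hc x Hx) as [n [s [Hf Hs]]]. exists n. rewrite Hf. split; auto.
    - intro n. apply Rle_trans with (sum_f_R0 (fun j => q * wt (f j)) n).
      + apply sum_f_R0_le. intro k. destruct (f k) as [u|]. apply bad_local; lra.
        rewrite outer_empty; auto. simpl; lra.
      + rewrite sum_f_R0_scal. apply Rmult_le_compat_l. lra. apply Hb. }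
  pose proof (outer_nonneg (Sset C q)).
  assert ((1 - q) * outer (Sset C q) <= 0).
  { apply le_eps_le. intros eps He. specialize (H eps He). lra. }
  assert (0 < 1 - q) by lra. nra.
Qed.

Lemma density_null C : outer (fun x => C x /\ ~ density_at C x 1) = 0.
Proof.
  apply Rle_antisym; [|apply outer_nonneg].
  apply outer_csub with (A := fun j => Sset C (1 - / (INR j + 2))).
  - intros x [Cx Hd].
    assert (Hex : exists eps, eps > 0 /\ forall M, exists n, (n >= M)%nat /\ R_dist (rat C (restr x n)) 1 >= eps).
    { apply NNPP; intro No. apply Hd. intros eps He.
      apply NNPP; intro No2. apply No. exists eps. split; auto. intro M.
      apply NNPP; intro No3. apply No2. exists M. intros n Hn.
      destruct (Rlt_le_dec (R_dist (rat C (restr x n)) 1) eps); auto.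
      exfalso; apply No3. exists n; split; auto; lra. }
    destruct Hex as [eps [He Hn]]. destruct (archimed_cor1 eps He) as [j [Hj Hj0]].
    exists j. split; auto. intro m. destruct (Hn m) as [n [Hnm Hr]]. exists n. split; auto.
    unfold bad. pose proof (rat_le1 C (restr x n)).
    unfold R_dist in Hr. rewrite Rabs_minus_sym, Rabs_pos_eq in Hr by lra.
    assert (0 < INR j) by (apply lt_0_INR; auto).
    assert (/ (INR j + 2) < / INR j) by (apply Rinv_lt_contravar; nra).
    unfold rat in *. rewrite outer_N in *. pose proof (w_pos (restr x n)).
    set (o := outer (inter C (N (restr x n)))) in *.
    assert (o / w (restr x n) < 1 - / (INR j + 2)) by lra.
    apply Rmult_lt_compat_r with (r := w (restr x n)) in H3; auto.
    unfold Rdiv in H3. rewrite Rmult_assoc, Rinv_l in H3; lra.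
  - intro n. eapply Rle_trans; [|right; apply (sum_f_R0_zero n)]. apply sum_f_R0_le. intro k.
    right. apply bad_null. split.
    + assert (/ (INR k + 2) <= 1). { pose proof (pos_INR k).
        rewrite <- Rinv_1. apply Rinv_le_contravar; lra. } lra.
    + assert (0 < / (INR k + 2)). { pose proof (pos_INR k). apply Rinv_0_lt_compat; lra. } lra.
Qed.
Lemma cv_ext (u v : nat -> R) l : (forall n, u n = v n) -> Un_cv u l -> Un_cv v l.
Proof. intros H Hu eps He. destruct (Hu eps He) as [M HM]. exists M. intros n Hn. rewrite <- H. auto. Qed.

Lemma cv_one_minus (u : nat -> R) l : Un_cv u l -> Un_cv (fun n => 1 - u n) (1 - l).
Proof. intros Hu eps He. destruct (Hu eps He) as [M HM]. exists M. intros n Hn.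
  specialize (HM n Hn). unfold R_dist in *. replace (1 - u n - (1 - l)) with (- (u n - l)) by ring.
  rewrite Rabs_Ropp; auto. Qed.

Lemma rat_compl B s : measurable B -> rat (compl B) s = 1 - rat B s.
Proof. intro HB. unfold rat. rewrite outer_N. pose proof (HB (N s)) as E. rewrite outer_N in E.
  assert (E1 : outer (inter (compl B) (N s)) = outer (diff (N s) B)) by (apply outer_ext; intro x; unfold inter, diff, compl; tauto).
  assert (E2 : outer (inter B (N s)) = outer (inter (N s) B)) by (apply outer_ext; intro x; unfold inter; tauto).
  rewrite E1, E2. pose proof (w_pos s). rewrite E. field. lra. Qed.

Lemma density_compl1 B x l : measurable B -> density_at (compl B) x l -> density_at B x (1 - l).
Proof. intros HB H. apply cv_one_minus in H. eapply cv_ext; [|exact H]. intro n.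
  change (1 - rat (compl B) (restr x n) = rat B (restr x n)).
  rewrite (rat_compl B _ HB). ring. Qed.

Lemma density_compl2 B x l : measurable B -> density_at B x l -> density_at (compl B) x (1 - l).
Proof. intros HB H. apply cv_one_minus in H. eapply cv_ext; [|exact H]. intro n.
  change (1 - rat B (restr x n) = rat (compl B) (restr x n)).
  rewrite (rat_compl B _ HB). ring. Qed.

Definition ae (A B : cset) := outer (diff A B) = 0 /\ outer (diff B A) = 0.

Lemma ae_sym A B : ae A B -> ae B A.
Proof. intros [? ?]; split; auto. Qed.

Lemma ae_trans A B C : ae A B -> ae B C -> ae A C.
Proof. intros [H1 H2] [H3 H4]. split; apply Rle_antisym; try apply outer_nonneg.
  - assert (outer (diff A C) <= outer (diff A B) + outer (diff B C)); [|lra]. apply outer_sub2'.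
    intros x [Ha Hc]. destruct (classic (B x)); [right|left]; split; auto.
  - assert (outer (diff C A) <= outer (diff C B) + outer (diff B A)); [|lra]. apply outer_sub2'.
    intros x [Hc Ha]. destruct (classic (B x)); [right|left]; split; auto.
Qed.

Lemma ae_of_eq A B : set_eq A B -> ae A B.
Proof. intro H. split; apply outer_empty; intros x [H1 H2]; apply H2, H; auto. Qed.

Lemma ae_inter_l A B E : ae A B -> outer (inter E A) <= outer (inter E B).
Proof. intros [H1 H2]. rewrite <- (Rplus_0_r (outer (inter E B))). rewrite <- H1.
  apply outer_sub2'. intros x [He Ha]. destruct (classic (B x)); [left|right]; split; auto. Qed.

Lemma ae_inter_r A B E : ae A B -> outer (inter A E) <= outer (inter B E).
Proof. intros [H1 H2]. rewrite <- (Rplus_0_r (outer (inter B E))). rewrite <- H1.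
  apply outer_sub2'. intros x [Ha He]. destruct (classic (B x)); [left|right]; split; auto. Qed.

Lemma ae_diff A B E : ae A B -> outer (diff E A) <= outer (diff E B).
Proof. intros [H1 H2]. rewrite <- (Rplus_0_r (outer (diff E B))). rewrite <- H2.
  apply outer_sub2'. intros x [He Ha]. destruct (classic (B x)); [right|left]; split; auto. Qed.

Lemma ae_meas A B : ae A B -> measurable A -> measurable B.
Proof. intros H HA E. rewrite (HA E). f_equal; apply Rle_antisym.
  apply ae_inter_l; auto. apply ae_inter_l, ae_sym; auto.
  apply ae_diff; auto. apply ae_diff, ae_sym; auto. Qed.

Lemma ae_rat A B s : ae A B -> rat A s = rat B s.
Proof. intro H. unfold rat. f_equal. apply Rle_antisym; apply ae_inter_r; auto. apply ae_sym; auto. Qed.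

Lemma ae_density A B x l : ae A B -> density_at A x l -> density_at B x l.
Proof. intros H D. eapply cv_ext; [|exact D]. intro n. apply (ae_rat _ _ _ H). Qed.

Lemma ae_compl A B : ae A B -> ae (compl A) (compl B).
Proof. intros [H1 H2]. split.
  - rewrite <- H2. apply outer_ext. intro x; unfold diff, compl. split. intros [? ?]; split; auto; apply NNPP; auto. tauto.
  - rewrite <- H1. apply outer_ext. intro x; unfold diff, compl. split. intros [? ?]; split; auto; apply NNPP; auto. tauto.
Qed.

Lemma phi_ae B : measurable B -> ae B (Phi B).
Proof. intro HB. split.
  - apply density_null.
  - apply Rle_antisym; [|apply outer_nonneg]. rewrite <- (density_null (compl B)). apply outer_mono.
    intros x [Hp Hb]. split; auto. intro Hc. apply density_compl1 in Hc; auto.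
    replace (1 - 1) with 0 in Hc by ring. pose proof (UL_sequence _ _ _ Hp Hc). lra.
Qed.

Lemma tc_dual A : T_clopen A -> dualistic A.
Proof. intros [HA [Hp Hpc]]. split; auto. intro x. destruct (classic (A x)) as [Ax|Ax].
  - exists 1. split; auto. apply Hp; auto.
  - exists 0. split; auto. assert (Phi (compl A) x) by (apply Hpc; auto).
    apply density_compl1 in H; auto. replace (1 - 1) with 0 in H by ring. auto.
Qed.

Lemma dual_tc A B : dualistic B -> set_eq A (Phi B) -> T_clopen A.
Proof.
  intros [HB Hd] HA.
  assert (Hae : ae B A). { eapply ae_trans. apply phi_ae; auto. apply ae_of_eq. intro x; symmetry; apply HA. }
  split; [|split].
  - eapply ae_meas; eauto.
  - intro x. unfold Phi. split.
    + intro H. apply HA. apply (ae_density A B); auto. apply ae_sym; auto.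
    + intro H. apply HA in H. apply (ae_density B A); auto.
  - intro x. unfold Phi, compl. split.
    + intros H Ax. apply (ae_density _ (compl B)) in H; [|apply ae_compl, ae_sym; auto].
      apply density_compl1 in H; auto. replace (1 - 1) with 0 in H by ring.
      apply HA in Ax. pose proof (UL_sequence _ _ _ H Ax). lra.
    + intro H. apply (ae_density (compl B)); [apply ae_compl; auto|].
      destruct (Hd x) as [l [Hl [->| ->]]].
      * apply density_compl2 in Hl; auto. replace (1 - 0) with 1 in Hl by ring. auto.
      * exfalso. apply H. apply HA. auto.
Qed.

Lemma tc_delta A : T_clopen A -> Delta02 A.
Proof.
  intro HT. pose proof (tc_dual A HT) as [_ Hd]. destruct HT as [HA [Hp Hpc]].
  assert (D1 : forall x, A x -> density_at A x 1) by (intros x Ax; apply Hp; auto).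
  assert (D0 : forall x, ~ A x -> density_at A x 0).
  { intros x Ax. destruct (Hd x) as [l [Hl [->| ->]]]; auto. exfalso; apply Ax, Hp; auto. }
  assert (Hrs : forall x y n, N (restr x n) y -> rat A (restr y n) = rat A (restr x n)).
  { intros x y n H. rewrite (N_restr_eq _ _ _ H). auto. }
  split.
  - exists (fun m x => forall n, (m <= n)%nat -> 1/2 <= rat A (restr x n)). split.
    + intros m x Hx. unfold compl in Hx. apply not_all_ex_not in Hx. destruct Hx as [n Hn].
      exists n. intros y Hy Hy2. apply Hn. intro Hmn. rewrite <- (Hrs x y n Hy). auto.
    + intro x. split.
      * intro Ax. destruct (D1 x Ax (1/2)) as [M HM]; [lra|]. exists M. intros n Hn.
        specialize (HM n Hn). unfold R_dist in HM. apply Rabs_def2 in HM. destruct HM. fold (rat A (restr x n)) in *. lra.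
      * intros [m Hm]. apply NNPP; intro Ax. destruct (D0 x Ax (1/2)) as [M HM]; [lra|].
        specialize (HM (Nat.max m M) ltac:(lia)). specialize (Hm (Nat.max m M) ltac:(lia)).
        unfold R_dist in HM. apply Rabs_def2 in HM. destruct HM. fold (rat A (restr x (Nat.max m M))) in *. lra.
  - exists (fun m x => exists n, (m <= n)%nat /\ 1/2 < rat A (restr x n)). split.
    + intros m x [n [Hn Hr]]. exists n. intros y Hy. exists n. split; auto. rewrite (Hrs x y n Hy). auto.
    + intro x. split.
      * intros Ax m. destruct (D1 x Ax (1/2)) as [M HM]; [lra|]. exists (Nat.max m M). split; [lia|].
        specialize (HM (Nat.max m M) ltac:(lia)). unfold R_dist in HM. apply Rabs_def2 in HM. destruct HM.
        fold (rat A (restr x (Nat.max m M))) in *. lra.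
      * intro Hm. apply NNPP; intro Ax. destruct (D0 x Ax (1/2)) as [M HM]; [lra|].
        destruct (Hm M) as [n [Hn Hr]]. specialize (HM n Hn). unfold R_dist in HM. apply Rabs_def2 in HM.
        destruct HM. fold (rat A (restr x n)) in *. lra.
Qed.
Definition Cell (k : nat) : cset := fun x => x (2 * k)%nat = true /\ forall i, (i < 2 * k)%nat -> x i = false.
Definition Bex : cset := fun x => exists k, Cell k x.

Lemma meas_Cell k : measurable (Cell k).
Proof.
  assert (forall m, measurable (fun x => x (2 * k)%nat = true /\ forall i, (i < m)%nat -> x i = false)).
  { induction m.
    - apply meas_ext with (H_ (2 * k)). intro x; unfold H_; split. intro H; split; auto; intros; lia. tauto.
      apply meas_H.
    - apply meas_ext with (inter (fun x => x (2 * k)%nat = true /\ forall i, (i < m)%nat -> x i = false) (compl (H_ m))).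
      + intro x; unfold inter, compl, H_; split.
        * intros [[H1 H2] H3]. split; auto. intros i Hi. destruct (Nat.eq_dec i m). subst. destruct (x m); auto; contradiction.
          apply H2; lia.
        * intros [H1 H2]. split. split; auto. rewrite H2; auto; discriminate.
      + apply meas_inter; auto. apply meas_compl, meas_H. }
  apply H.
Qed.

Lemma Cell_disj j k x : Cell j x -> Cell k x -> j = k.
Proof. intros [H1 H2] [H3 H4]. destruct (Nat.lt_total j k) as [Hl|[He|Hl]]; auto.
  rewrite H4 in H1; [discriminate|lia]. rewrite H2 in H3; [discriminate|lia]. Qed.

Lemma meas_Bex : measurable Bex.
Proof. apply meas_cunion. apply meas_Cell. apply Cell_disj. Qed.

Lemma agree_N x y n : (forall i, (i < n)%nat -> y i = x i) -> N (restr x n) y.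
Proof. intro H. apply N_iff_restr. rewrite length_restr. apply restr_eq_iff; auto. Qed.

Lemma N_agree x y n : N (restr x n) y -> forall i, (i < n)%nat -> y i = x i.
Proof. intro H. apply N_restr_eq in H. apply restr_eq_iff; auto. Qed.

Lemma Cell_dep k x y : (forall i, (i < 2 * k + 1)%nat -> y i = x i) -> Cell k x -> Cell k y.
Proof. intros H [H1 H2]. split. rewrite H; auto; lia. intros i Hi. rewrite H; [apply H2|]; lia. Qed.

Lemma rat_full X s : (forall y, N s y -> X y) -> rat X s = 1.
Proof. intro H. unfold rat. rewrite (outer_ext (inter X (N s)) (N s)).
  rewrite outer_N. pose proof (w_pos s). field. lra.
  intro y; unfold inter; split; [tauto|]. intro; split; auto. Qed.

Lemma rat_zero X s : (forall y, N s y -> ~ X y) -> rat X s = 0.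
Proof. intro H. unfold rat. rewrite outer_empty. unfold Rdiv; ring. intros y [Hx Hy]. eapply H; eauto. Qed.

Lemma rat_half X s t : (forall y, X y -> N s y -> N t y) -> length t = S (length s) -> rat X s <= 1/2.
Proof. intros H E. unfold rat. rewrite outer_N.
  assert (outer (inter X (N s)) <= w t) by (apply outer_cyl_le; intros y [H1 H2]; auto).
  assert (w t = w s / 2) by (unfold w; rewrite E; simpl; rewrite Rinv_mult; unfold Rdiv; ring).
  pose proof (w_pos s). apply Rmult_le_reg_r with (w s); auto. unfold Rdiv. rewrite Rmult_assoc, Rinv_l; lra. Qed.

Lemma not_cv1 (u : nat -> R) : (forall M, exists n, (n >= M)%nat /\ u n <= 1/2) -> ~ Un_cv u 1.
Proof. intros H Hc. destruct (Hc (1/2)) as [M HM]; [lra|]. destruct (H M) as [n [Hn Hu]].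
  specialize (HM n Hn). unfold R_dist in HM. apply Rabs_def2 in HM. lra. Qed.

Lemma Bex_in x : Bex x -> density_at Bex x 1.
Proof. intros [k Hk] eps He. exists (2 * k + 1)%nat. intros n Hn.
  change (rat Bex (restr x n)) with (rat Bex (restr x n)).
  assert (rat Bex (restr x n) = 1).
  { apply rat_full. intros y Hy. exists k. apply (Cell_dep k x y); auto.
    intros i Hi. apply (N_agree x y n Hy). lia. }
  unfold R_dist. fold (rat Bex (restr x n)). rewrite H. rewrite Rminus_diag, Rabs_R0. auto. Qed.

Lemma Bex_out x : ~ Bex x -> ~ density_at Bex x 1.
Proof.
  intro Hx. change (~ Un_cv (fun n => rat Bex (restr x n)) 1). apply not_cv1.
  destruct (classic (exists i, x i = true)) as [Hi|Hi].
  - destruct (least _ Hi) as [i [Hxi Hmin]].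
    destruct (Nat.Even_or_Odd i) as [[k ->]|[k ->]].
    + exfalso. apply Hx. exists k. split; auto. intros j Hj. destruct (x j) eqn:E; auto. exfalso; apply (Hmin j); auto.
    + intro M. exists (Nat.max M (2 * k + 2)). split; [lia|].
      rewrite rat_zero; [lra|]. intros y Hy [k' [Hk1 Hk2]].
      pose proof (N_agree x y _ Hy) as Ha.
      destruct (Nat.lt_total (2 * k') (2 * k + 1)) as [Hl|[He|Hl]].
      * rewrite Ha in Hk1 by lia. apply (Hmin (2 * k')%nat); auto.
      * lia.
      * specialize (Hk2 (2 * k + 1)%nat Hl). rewrite Ha in Hk2 by lia. congruence.
  - assert (Hz : forall i, x i = false).
    { intro i. destruct (x i) eqn:E; auto. exfalso; apply Hi; exists i; auto. }
    intro M. exists (2 * M + 1)%nat. split; [lia|].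
    apply (rat_half _ _ (restr x (2 * M + 2))).
    + intros y [k [Hk1 Hk2]] Hy. pose proof (N_agree x y _ Hy) as Ha. apply agree_N. intros j Hj.
      destruct (Nat.lt_ge_cases j (2 * M + 1)). apply Ha; auto.
      assert (j = 2 * M + 1)%nat by lia. subst j.
      destruct (Nat.lt_ge_cases (2 * k) (2 * M + 1)).
      * rewrite Ha in Hk1 by lia. rewrite Hz in Hk1. discriminate.
      * rewrite Hz. apply Hk2. lia.
    + rewrite !length_restr. lia.
Qed.

Definition zero : Cantor := fun _ => false.

Lemma Bex_not_tc : ~ T_clopen Bex.
Proof.
  intros [_ [_ Hc]]. assert (Hz : compl Bex zero).
  { intros [k [Hk _]]. discriminate. }
  apply Hc in Hz. revert Hz. change (~ Un_cv (fun n => rat (compl Bex) (restr zero n)) 1). apply not_cv1.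
  intro M. exists (2 * M)%nat. split; [lia|].
  apply (rat_half _ _ (restr zero (2 * M + 1))).
  - intros y Hy HN. pose proof (N_agree zero y _ HN) as Ha. apply agree_N. intros j Hj.
    destruct (Nat.lt_ge_cases j (2 * M)). apply Ha; auto.
    assert (j = 2 * M)%nat by lia. subst j. unfold zero. destruct (y (2 * M)%nat) eqn:E; auto.
    exfalso. apply Hy. exists M. split; auto; intros i Hi; rewrite Ha; auto.
  - rewrite !length_restr. lia.
Qed.

Lemma Bex_phi : set_eq Bex (Phi Bex).
Proof. intro x. split. apply Bex_in. intro H. apply NNPP; intro Hx. apply (Bex_out x Hx); auto. Qed.

Lemma Bex_delta : Delta02 Bex.
Proof. split.
  - exists Cell. split.
    + intros n x Hx. exists (2 * n + 1)%nat. intros y Hy Hcy. apply Hx.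
      apply (Cell_dep n y x); auto. intros i Hi. symmetry. apply (N_agree x y _ Hy); auto.
    + intro x; unfold Bex; tauto.
  - exists (fun _ => Bex). split.
    + intros n x [k Hk]. exists (2 * k + 1)%nat. intros y Hy. exists k.
      apply (Cell_dep k x y); auto. apply (N_agree x y _ Hy).
    + intro x. split; auto. intro H; apply (H 0%nat).
Qed.

Theorem corollary5p4 :
  (forall A : cset,
     (T_clopen A <-> exists B, dualistic B /\ set_eq A (Phi B)) /\
     (T_clopen A <-> in_ran_Phi A /\ dualistic A)) /\
  (forall A : cset, T_clopen A -> in_ran_Phi A /\ Delta02 A) /\
  (exists A : cset, in_ran_Phi A /\ Delta02 A /\ ~ T_clopen A).
Proof.
  assert (Hself : forall A, T_clopen A -> set_eq A (Phi A)).
  { intros A [_ [Hp _]] x. symmetry. apply Hp. }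
  split; [|split].
  - intro A. split.
    + split.
      * intro HT. exists A. split. apply tc_dual; auto. apply Hself; auto.
      * intros [B [HB HA]]. apply (dual_tc A B); auto.
    + split.
      * intro HT. split. exists A. split. apply HT. apply Hself; auto. apply tc_dual; auto.
      * intros [[B [HB HA]] HD]. apply (dual_tc A A HD).
        assert (Hae : ae B A). { eapply ae_trans. apply phi_ae; auto. apply ae_of_eq. intro x; symmetry; apply HA. }
        intro x. split.
        -- intro Ax. apply HA in Ax. apply (ae_density B A); auto.
        -- intro Hp. apply HA. apply (ae_density A B); auto. apply ae_sym; auto.
  - intros A HT. split. exists A. split. apply HT. apply Hself; auto. apply tc_delta; auto.
  - exists Bex. split. exists Bex. split. apply meas_Bex. apply Bex_phi. split. apply Bex_delta. apply Bex_not_tc.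
Qed.
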